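(* Let $X\sim N(-\mu,\sigma^2)$ with $\mu\ge0$ and $\sigma>0$. Then for every $0\le\epsilon\le1$, $$\mathbb P\Big(0\le X\le\epsilon\big(\sigma\wedge\tfrac{\sigma^2}{\mu}\big)\Big)\ge\frac{\epsilon}{5}\,\mathbb P(X\ge0),$$ with the convention $\sigma^2/0=\infty$. *)

(* Defs.v *)
From HB Require Import structures.
From mathcomp Require Import all_boot all_order all_algebra.
From mathcomp Require Import all_classical all_reals all_analysis.
Set Implicit Arguments. Unset Strict Implicit. Unset Printing Implicit Defensive.
Import Order.TTheory GRing.Theory Num.Theory.
Local Open Scope ring_scope.

(* sigma /\ sigma^2/mu, with the convention sigma^2/0 = +oo, so the value is
   sigma when mu = 0. *)
Definition scale_bound {R : realType} (mu sigma : R) : R :=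
  if mu == 0 then sigma else Num.min sigma (sigma ^+ 2 / mu).

(* Main.v *)
Require Import Defs.
From HB Require Import structures.
From mathcomp Require Import all_boot all_order all_algebra.
From mathcomp Require Import all_classical all_reals all_analysis.
From mathcomp Require Import ring lra measurable_realfun.
Import Order.TTheory GRing.Theory Num.Theory.
Import numFieldNormedType.Exports.
Local Open Scope classical_set_scope.
Local Open Scope ring_scope.

Section T0.
Variable R : realType.
Lemma shift_int (f : R -> R) (b : R) : continuous f -> (forall x, 0 <= f x) ->
 (\int[lebesgue_measure]_(x in `[b, +oo[) (f x)%:E =
  \int[lebesgue_measure]_(x in `[0%R, +oo[) (f (x + b))%:E)%E.
Proof.
move=> cf f0.
have F'E : ((fun x : R => x + b)^`())%classic = cst 1.
  by apply/funext => x; rewrite derive1E deriveD// derive_id derive_cst addr0.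
have := @increasing_ge0_integration_by_substitutiony R (fun x => x + b) f 0.
rewrite add0r => ->.
- by apply: eq_integral => x _; rewrite F'E /= mulr1.
- by move=> x y _ _ xy; rewrite ltrD2r.
- by rewrite F'E => ? _; exact: cst_continuous.
- by rewrite F'E; exact: is_cvg_cst.
- by rewrite F'E; exact: is_cvg_cst.
- split. move=> x _. apply: derivableD; [exact: derivable_id|exact: derivable_cst].
  by apply: cvg_at_right_filter; apply: cvgD; [exact: cvg_id|exact: cvg_cst].
- exact: cvg_addrr.
- by move=> x; apply: continuous_subspaceT.
- by move=> x _; exact: f0.
Qed.
End T0.

Section S.
Variables (R : realType) (mu sigma : R).
Hypotheses (hmu : 0 <= mu) (hs : 0 < sigma).

Let f := normal_pdf (- mu) sigma.
Let b := scale_bound mu sigma.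

Lemma fE (x : R) : f x = normal_peak sigma * expR (- (x + mu) ^+ 2 / (sigma ^+ 2 *+ 2)).
Proof. by rewrite /f /normal_pdf gt_eqF // /normal_fun opprK. Qed.

Lemma kpos : 0 < sigma ^+ 2 *+ 2.
Proof. by rewrite pmulrn_lgt0 // exprn_gt0. Qed.

Lemma peak_pos : 0 < normal_peak sigma.
Proof. by rewrite normal_peak_gt0 // gt_eqF. Qed.

Lemma f_dec (x y : R) : 0 <= x -> x <= y -> f y <= f x.
Proof.
move=> x0 xy; rewrite !fE ler_pM2l ?peak_pos // ler_expR !mulNr lerN2.
apply: ler_wpM2r; first by rewrite invr_ge0 ltW // kpos.
rewrite expr2 [X in _ <= X]expr2; apply: ler_pM.
- by rewrite addr_ge0.
- by rewrite addr_ge0.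
- by rewrite lerD2r.
- by rewrite lerD2r.
Qed.

Lemma b_pos : 0 < b.
Proof.
rewrite /b /scale_bound; case: eqP => // mu0.
have mup : 0 < mu by rewrite lt_neqAle eq_sym; apply/andP; split => //; apply/eqP.
by rewrite lt_min hs divr_gt0 // exprn_gt0.
Qed.

Lemma b_key : sigma ^+ 2 <= 2 * b * mu + b ^+ 2.
Proof.
rewrite /b /scale_bound; case: eqP => [->|mu0]; first by nra.
have mup : 0 < mu by rewrite lt_neqAle eq_sym; apply/andP; split => //; apply/eqP.
rewrite /Order.min; case: ifPn => h.
  have := mulr_ge0 (ltW hs) hmu; lra.
rewrite -mulrA divfK; last by rewrite gt_eqF.
have := sqr_ge0 (sigma ^+ 2 / mu); nra.
Qed.

Lemma expRhalf : expR (- (1/2)) <= 4/5 :> R.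
Proof.
rewrite expRN.
have h := expR_ge1Dx (1/2 : R).
have h32 : (0:R) < 3/2 by rewrite divr_gt0.
apply: (@le_trans _ _ ((3/2 : R)^-1)).
  rewrite lef_pV2 ?posrE ?expR_gt0 //; lra.
rewrite invf_div; lra.
Qed.

Lemma f_shift (x : R) : 0 <= x -> f (x + b) <= 4/5 * f x.
Proof.
move=> x0; rewrite !fE mulrCA ler_pM2l ?peak_pos //.
have -> : - (x + b + mu) ^+ 2 / (sigma ^+ 2 *+ 2) =
  - (x + mu) ^+ 2 / (sigma ^+ 2 *+ 2) + (- (2 * b * (x + mu) + b ^+ 2) / (sigma ^+ 2 *+ 2)).
  by rewrite -mulrDl; congr (_ / _); ring.
rewrite expRD mulrC ler_wpM2r ?expR_ge0 //.
apply: le_trans expRhalf; rewrite ler_expR.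
have hk := kpos; have hb := b_key; have bp := b_pos.
rewrite ler_pdivrMr //; nra.
Qed.

Let N := normal_prob (- mu) sigma.

Lemma NE (A : set R) : measurable A -> N A = (fine (N A))%:E.
Proof. by move=> mA; rewrite fineK //; exact: fin_num_measure. Qed.

Lemma cf : continuous f.
Proof. by apply: continuous_normal_pdf; rewrite gt_eqF. Qed.

Lemma mf (D : set R) : measurable_fun D (fun x => (f x)%:E : \bar R).
Proof. apply/measurable_EFinP; apply: measurable_funTS; exact: measurable_normal_pdf. Qed.

Lemma tail : (N `[b, +oo[ <= (4/5)%:E * N `[0%R, +oo[)%E.
Proof.
rewrite /N /normal_prob -/f shift_int; last 2 first.
- exact: cf.
- by move=> x; exact: normal_pdf_ge0.
rewrite -ge0_integralZl //; try exact: mf; try (by move=> x _; rewrite lee_fin normal_pdf_ge0); try (by rewrite lee_fin; lra).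
apply: ge0_le_integral => //.
- by move=> x _; rewrite lee_fin normal_pdf_ge0.
- apply/measurable_EFinP; apply: measurable_funTS.
  apply: measurableT_comp; first exact: measurable_normal_pdf.
  exact: measurable_funD.
- apply/measurable_EFinP; apply: measurable_funTS.
  apply: measurable_funM => //; exact: measurable_normal_pdf.
- move=> x /=; rewrite in_itv /= andbT => x0.
  by rewrite lee_fin f_shift.
Qed.

Lemma lower (c : R) : 0 < c -> ((c * f c)%:E <= N `[0%R, c])%E.
Proof.
move=> c0.
have <- : (\int[lebesgue_measure]_(x in `[0%R, c]) (f c)%:E = (c * f c)%:E)%E.
  rewrite integral_cst //= lebesgue_measure_itv /= lte_fin c0.
  by rewrite oppr0 adde0 -EFinM mulrC.
rewrite /N /normal_prob -/f.
apply: ge0_le_integral => //; try exact: mf; try (by move=> x _; rewrite lee_fin normal_pdf_ge0).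
- move=> x /=; rewrite in_itv /= => /andP[x0 xc].
  by rewrite lee_fin f_dec.
Qed.

Lemma upper (c b' : R) : 0 <= c -> c <= b' -> (N `]c, b'] <= ((b' - c) * f c)%:E)%E.
Proof.
move=> c0 cb.
have <- : (\int[lebesgue_measure]_(x in `]c, b']) (f c)%:E = ((b' - c) * f c)%:E)%E.
  rewrite integral_cst //= lebesgue_measure_itv /= lte_fin.
  case: ifPn => h; first by rewrite -EFinM mulrC.
  have -> : b' = c by apply/eqP; rewrite eq_le cb leNgt h.
  by rewrite subrr mul0r mule0.
rewrite /N /normal_prob -/f.
apply: ge0_le_integral => //; try exact: mf; try (by move=> x _; rewrite lee_fin normal_pdf_ge0).
move=> x /=; rewrite in_itv /= => /andP[x0 xc].
by rewrite lee_fin f_dec //; apply: ltW.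
Qed.

Lemma main_ineq (eps : R) : 0 < eps -> eps <= 1 ->
  ((eps / 5)%:E * N `[0%R, +oo[ <= N `[0%R, (eps * b)%R])%E.
Proof.
move=> e0 e1.
have bp := b_pos.
set c := eps * b.
have cp : 0 < c by rewrite mulr_gt0.
have cb : c <= b by rewrite /c ler_piMl // ltW.
have U1 : N `[0%R, +oo[ = (N `[0%R, b[ + N `[b, +oo[)%E.
  rewrite (@itv_bndbnd_setU _ _ _ (BLeft b)); last 2 first.
    by rewrite bnd_simp ltW.
    by [].
  apply: measureU => //.
  apply/seteqP; split => // x [] /=; rewrite !in_itv /= andbT => /andP[_ h1] h2.
  by move: h1; rewrite ltNge h2.
have U2 : N `[0%R, b] = (N `[0%R, c] + N `]c, b])%E.
  rewrite (@itv_bndbnd_setU _ _ _ (BRight c)); last 2 first.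
    by rewrite bnd_simp ltW.
    by rewrite bnd_simp.
  apply: measureU => //.
  apply/seteqP; split => // x [] /=; rewrite !in_itv /= => /andP[_ h1] /andP[h2 _].
  by move: h1; rewrite leNgt h2.
have M : (N `[0%R, b[ <= N `[0%R, b])%E.
  apply: le_measure; rewrite ?inE //.
  by move=> x /=; rewrite !in_itv /= => /andP[h1 h2]; rewrite h1 ltW.
have Lo := lower c cp.
have Up := @upper c b (ltW cp) cb.
have Ta := tail.
move: U1 U2 M Lo Up Ta.
rewrite (NE `[0%R, +oo[) // (NE `[0%R, b[) // (NE `[b, +oo[) //.
rewrite (NE `[0%R, b]) // (NE `[0%R, c]) // (NE `]c, b]) //.
rewrite -!EFinD -!EFinM !lee_fin => /(congr1 fine) /= U1 /(congr1 fine) /= U2 M Lo Up Ta.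
have fc0 : 0 <= f c by exact: normal_pdf_ge0.
have B0 : 0 <= fine (N `]c, b]) by apply: fine_ge0; exact: measure_ge0.
have h1 : eps * fine (N `]c, b]) <= eps * ((b - c) * f c) by rewrite ler_wpM2l // ltW.
have h2 : (1 - eps) * (c * f c) <= (1 - eps) * fine (N `[0%R, c]) by rewrite ler_wpM2l // subr_ge0.
rewrite /c in h1 h2 Lo Up *.
nra.
Qed.
End S.

Theorem claim3p3 (R : realType) (d : measure_display) (T : measurableType d)
  (P : probability T R) (X : {RV P >-> R}) (mu sigma : R)
  (hmu : 0 <= mu) (hsigma : 0 < sigma)
  (hX : distribution P X = normal_prob (- mu) sigma :> (set R -> \bar R))
  (eps : R) (heps0 : 0 <= eps) (heps1 : eps <= 1) :
  ((eps / 5)%:E * P [set w | (0 <= X w)%R]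
     <= P [set w | (0 <= X w <= eps * scale_bound mu sigma)%R])%E.
Proof.
have [->|en0] := eqVneq eps 0.
  by rewrite mul0r mul0e; exact: measure_ge0.
have e0 : 0 < eps by rewrite lt_neqAle eq_sym en0.
have H1 : [set w | 0 <= X w] = X @^-1` `[0%R, +oo[.
  by apply/seteqP; split => w /=; rewrite in_itv /= andbT.
have H2 : [set w | 0 <= X w <= eps * scale_bound mu sigma] =
    X @^-1` `[0%R, eps * scale_bound mu sigma].
  by apply/seteqP; split => w /=; rewrite in_itv.
rewrite H1 H2.
have E A : P (X @^-1` A) = normal_prob (- mu) sigma A by rewrite -hX.
rewrite !E.
exact: main_ineq.
Qed.
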